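(* Let $\bar\eta>0$ be as in the setting below. For every $\eta_2\ge\bar\eta$, every $0\le\epsilon\le1/2$ and every $0<\bar\epsilon\le1$, the solution $\phi(\cdot;\eta_2,\epsilon,-\bar\epsilon)$ satisfies $\phi(\xi;\eta_2,\epsilon,-\bar\epsilon)<1$ for all $\xi\in[\bar\eta,\eta_2]$ belonging to its maximal existence interval.
   Context: Fix $d>2$. Define $f(\eta,v,w)=\frac{d+1}{\eta}w-\frac\eta2 w+\frac1d\eta v w+v^2-v$. For $(\eta_0,v_0,w_0)$ with $\eta_0>0$, $\phi(\xi;\eta_0,v_0,w_0)$ denotes the solution of $\phi''+f(\xi,\phi,\phi')=0$ with $\phi(\eta_0)=v_0$, $\phi'(\eta_0)=w_0$. $\bar\eta>0$ is a number such that for every $\eta_1\ge\bar\eta$, every solution $\phi$ of $\phi''+f(\xi,\phi,\phi')=0$ with $\phi(\eta_1)=1$, $\phi'(\eta_1)\le0$ satisfies $\phi'(\eta_2)<-1$ for all $\eta_2>\eta_1$ with $\phi(\eta_2)\in[0,1/2]$ (such $\bar\eta$ exists). *)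

(* Defs.v *)
From Stdlib Require Import Reals.
From Coquelicot Require Import Coquelicot.
Open Scope R_scope.

Definition f (d eta v w : R) : R :=
  (d + 1) / eta * w - eta / 2 * w + / d * eta * v * w + v ^ 2 - v.

Definition in_oint (a b : Rbar) (x : R) : Prop := Rbar_lt a x /\ Rbar_lt x b.

Definition is_solution (d : R) (a b : Rbar) (phi dphi : R -> R) : Prop :=
  Rbar_le (Finite 0) a /\ Rbar_lt a b /\
  forall x, in_oint a b x ->
    is_derive phi x (dphi x) /\ is_derive dphi x (- f d x (phi x) (dphi x)).

Definition is_maximal_solution (d eta0 v0 w0 : R) (a b : Rbar) (phi dphi : R -> R) : Prop :=
  is_solution d a b phi dphi /\ in_oint a b eta0 /\ phi eta0 = v0 /\ dphi eta0 = w0 /\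
  forall (a' b' : Rbar) (psi dpsi : R -> R),
    is_solution d a' b' psi dpsi -> in_oint a' b' eta0 -> psi eta0 = v0 -> dpsi eta0 = w0 ->
    Rbar_le a a' /\ Rbar_le b' b.

Definition eta_bar_property (d eta_bar : R) : Prop :=
  forall (eta1 : R), eta_bar <= eta1 ->
  forall (a b : Rbar) (phi dphi : R -> R),
    is_solution d a b phi dphi -> in_oint a b eta1 ->
    phi eta1 = 1 -> dphi eta1 <= 0 ->
    forall eta2, in_oint a b eta2 -> eta1 < eta2 ->
      0 <= phi eta2 <= 1 / 2 -> dphi eta2 < -1.

(* Main.v *)
Require Import Defs.
From Stdlib Require Import Reals Lra Classical.
From Coquelicot Require Import Coquelicot.
Open Scope R_scope.
Lemma cont_ed (phi : R -> R) l x : is_derive phi x l -> forall e, 0<e -> exists d, 0<d /\ forall y, Rabs (y-x) < d -> Rabs (phi y - phi x) < e.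
Proof.
intros Hd. assert (H : continuity_pt phi x).
{ apply continuity_pt_filterlim. apply (ex_derive_continuous (V:=R_NormedModule) phi x). exists l; exact Hd. }
intros e He. destruct (H e He) as [d [Hd0 H']]. exists d. split; auto.
intros y Hy. destruct (Req_dec y x). subst; rewrite Rminus_eq_0, Rabs_R0; auto.
apply H'. split. split; [exact I | auto]. exact Hy.
Qed.
Lemma der_ed (phi : R -> R) l x : is_derive phi x l -> forall e, 0<e -> exists d, 0<d /\ forall h, h <> 0 -> Rabs h < d -> Rabs ((phi (x+h) - phi x)/h - l) < e.
Proof.
intros Hd. apply is_derive_Reals in Hd. intros e He. destruct (Hd e He) as [d Hd'].
exists d. split. apply cond_pos. intros; apply Hd'; auto.
Qed.
Lemma oint_between a b x y z : in_oint a b x -> in_oint a b z -> x <= y <= z -> in_oint a b y.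
Proof.
intros [H1 _] [_ H2] [H3 H4]. split.
- apply Rbar_lt_le_trans with (Finite x); [exact H1|simpl; exact H3].
- apply Rbar_le_lt_trans with (Finite z); [simpl; exact H4|exact H2].
Qed.

Theorem corollaryA3 (d eta_bar : R) :
  2 < d -> 0 < eta_bar -> eta_bar_property d eta_bar ->
  forall (eta2 eps epsb : R),
    eta_bar <= eta2 -> 0 <= eps <= 1 / 2 -> 0 < epsb <= 1 ->
    forall (a b : Rbar) (phi dphi : R -> R),
      is_maximal_solution d eta2 eps (- epsb) a b phi dphi ->
      forall xi, eta_bar <= xi <= eta2 -> in_oint a b xi -> phi xi < 1.
Proof.
intros Hd Hb Hprop eta2 eps epsb He2 Heps Hepsb a b phi dphi
  [Hsol [Hin2 [Hp2 [Hdp2 _]]]] xi Hxi Hinxi.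
destruct (Rlt_or_le (phi xi) 1) as [Hlt|Hge]; [exact Hlt|exfalso].
assert (Hxl : xi < eta2).
{ destruct (Rle_lt_or_eq_dec xi eta2 (proj2 Hxi)) as [h|h]; auto. subst. lra. }
set (E := fun x => xi <= x <= eta2 /\ 1 <= phi x).
assert (HEb : bound E). { exists eta2. intros x Hx. apply Hx. }
assert (HEn : exists x, E x). { exists xi. split; [lra|exact Hge]. }
destruct (completeness E HEb HEn) as [m [Hub Hlub]].
assert (Hm1 : xi <= m). { apply Hub. split; [lra|exact Hge]. }
assert (Hm2 : m <= eta2). { apply Hlub. intros x Hx; apply Hx. }
assert (Hinm : in_oint a b m) by (apply (oint_between a b xi m eta2); auto; lra).
destruct Hsol as [Ha0 [Hab Hsolx]].
destruct (Hsolx m Hinm) as [Hder _].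
assert (Hright : forall y, m < y <= eta2 -> phi y < 1).
{ intros y Hy. destruct (Rlt_or_le (phi y) 1) as [h|h]; auto.
  assert (y <= m) by (apply Hub; split; [lra|exact h]). lra. }
assert (Hphim1 : 1 <= phi m).
{ destruct (Rlt_or_le (phi m) 1) as [h|h]; auto. exfalso.
  destruct (cont_ed phi _ m Hder (1 - phi m)) as [dl [Hdl Hc]]; [lra|].
  assert (Hnub : ~ is_upper_bound E (m - dl)).
  { intro H. assert (m <= m - dl) by (apply Hlub; exact H). lra. }
  apply Hnub. intros x Hx.
  destruct (Rle_or_lt x (m - dl)) as [h1|h1]; auto. exfalso.
  assert (x <= m) by (apply Hub; exact Hx).
  assert (Rabs (x - m) < dl) by (apply Rabs_def1; lra).
  specialize (Hc x H0). apply Rabs_def2 in Hc. destruct Hx. lra. }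
assert (Hmlt : m < eta2).
{ destruct (Rle_lt_or_eq_dec m eta2 Hm2) as [h|h]; auto. subst. lra. }
assert (Hphim : phi m = 1).
{ destruct (Rle_lt_or_eq_dec 1 (phi m) Hphim1) as [h|h]; auto. exfalso.
  destruct (cont_ed phi _ m Hder (phi m - 1)) as [dl [Hdl Hc]]; [lra|].
  set (y := Rmin (m + dl/2) eta2).
  assert (Hy1 : m < y) by (unfold y; apply Rmin_glb_lt; lra).
  assert (Hy2 : y <= m + dl/2) by (unfold y; apply Rmin_l).
  assert (Hy3 : y <= eta2) by (unfold y; apply Rmin_r).
  assert (Rabs (y - m) < dl) by (apply Rabs_def1; lra).
  specialize (Hc y H). apply Rabs_def2 in Hc.
  specialize (Hright y (conj Hy1 Hy3)). lra. }
assert (Hdm : dphi m <= 0).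
{ destruct (Rle_or_lt (dphi m) 0) as [h|h]; auto. exfalso.
  destruct (der_ed phi _ m Hder (dphi m / 2)) as [dl [Hdl Hc]]; [lra|].
  set (hh := Rmin (dl/2) (eta2 - m)).
  assert (Hh1 : 0 < hh) by (unfold hh; apply Rmin_glb_lt; lra).
  assert (Hh2 : hh <= dl/2) by (unfold hh; apply Rmin_l).
  assert (Hh3 : hh <= eta2 - m) by (unfold hh; apply Rmin_r).
  assert (Rabs hh < dl) by (rewrite Rabs_right; lra).
  specialize (Hc hh ltac:(lra) H). apply Rabs_def2 in Hc.
  assert (Hq : (phi (m + hh) - phi m) / hh > 0) by lra.
  assert (phi (m + hh) - phi m > 0).
  { apply Rmult_gt_reg_r with (/ hh). apply Rinv_0_lt_compat; lra.
    rewrite Rmult_0_l. exact Hq. }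
  specialize (Hright (m + hh) ltac:(lra)). lra. }
assert (Hfin := Hprop m ltac:(lra) a b phi dphi (conj Ha0 (conj Hab Hsolx)) Hinm Hphim Hdm
  eta2 Hin2 Hmlt ltac:(lra)).
lra.
Qed.
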